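(* Let $n \geq 2k \geq 4$ and let $\mathcal F, \mathcal G \subset \binom{[n]}{k}$ be non-trivial, cross-intersecting, initial families. For $P \subset [k+1]$ let $\mathcal F(P) = \{F \setminus P : F \in \mathcal F,\ F \cap [k+1] = P\}$ and $\mathcal G(P) = \{G \setminus P : G \in \mathcal G,\ G \cap [k+1] = P\}$. Let $2 \leq i \leq k/2$ and let $P, Q \in \binom{[k+1]}{i}$ be disjoint. Then $$|\mathcal F(P)| + |\mathcal G(Q)| + |\mathcal G([k+1]\setminus P)| + |\mathcal F([k+1]\setminus Q)| \leq \binom{n-k-1}{k-i} + \binom{n-k-1}{i-1}.$$
   Context: Families are cross-intersecting if every member of one meets every member of the other; a non-empty family is non-trivial if the intersection of all its members is empty. For $k$-sets $A=\{x_1<\dots<x_k\}$, $B=\{y_1<\dots<y_k\}$, $A\prec B$ means $x_i\le y_i$ for all $i$; a family is initial if $A\prec B\in\mathcal F$ implies $A\in\mathcal F$. *)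

(* Defs.v *)
From mathcomp Require Import all_boot.
Set Implicit Arguments. Unset Strict Implicit. Unset Printing Implicit Defensive.

(* Ground set [n] = {1..n} is modelled by 'I_n (element i <-> i+1). *)

Definition sorted_elems (n : nat) (A : {set 'I_n}) : seq nat :=
  sort leq [seq val x | x <- enum A].

Definition shift_le (n k : nat) (A B : {set 'I_n}) : bool :=
  [forall j : 'I_k, nth 0 (sorted_elems A) j <= nth 0 (sorted_elems B) j].

Definition k_uniform (n k : nat) (F : {set {set 'I_n}}) : Prop :=
  forall A : {set 'I_n}, A \in F -> #|A| = k.

Definition cross_intersecting (n : nat) (F G : {set {set 'I_n}}) : Prop :=
  forall A B : {set 'I_n}, A \in F -> B \in G -> A :&: B != set0.

Definition nontrivial (n : nat) (F : {set {set 'I_n}}) : Prop :=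
  F != set0 /\ \bigcap_(A in F) A = set0.

Definition initial (n k : nat) (F : {set {set 'I_n}}) : Prop :=
  forall A B : {set 'I_n}, #|A| = k -> B \in F -> shift_le k A B -> A \in F.

(* [k+1] = {1,...,k+1}, i.e. indices 0..k *)
Definition firstk (n m : nat) : {set 'I_n} := [set x : 'I_n | val x < m].

Definition restr (n k : nat) (F : {set {set 'I_n}}) (P : {set 'I_n})
  : {set {set 'I_n}} :=
  [set A :\: P | A in [set A in F | A :&: firstk n k.+1 == P]].

(* Main.v *)
Require Import Defs.
From mathcomp Require Import all_boot.
From mathcomp Require Import zify.
Set Implicit Arguments. Unset Strict Implicit. Unset Printing Implicit Defensive.

Lemma nth_sorted_le (s : seq nat) j v : sorted leq s -> j < size s ->
  (nth 0 s j <= v) = (j < count (fun x => x <= v) s).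
Proof.
elim: s j => [|x s IH] j //= Hs Hj.
have Hs' : sorted leq s by apply: path_sorted Hs.
have Hall : all (leq x) s by apply: order_path_min Hs; exact: leq_trans.
have Hc : v < x -> count (fun x => x <= v) s = 0.
  move=> Hvx; rewrite (@eq_in_count _ _ pred0) ?count_pred0 // => y Hy /=.
  have := allP Hall y Hy => Hxy; apply/negbTE; rewrite -ltnNge.
  exact: leq_trans Hvx Hxy.
case: j Hj => [|j] Hj /=.
  case: (leqP x v) => Hxv //=; by rewrite Hc.
case: (leqP x v) => Hxv /=.
  by rewrite add1n ltnS IH.
rewrite Hc // add0n ltn0; apply/negbTE; rewrite -ltnNge.
apply: (leq_trans Hxv); apply: (allP Hall); apply: mem_nth; by [].
Qed.

Lemma count_sorted_elems n (A : {set 'I_n}) v :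
  count (fun x => x <= v) (sorted_elems A) = #|[set x in A | val x <= v]|.
Proof.
rewrite /sorted_elems count_sort count_map cardE.
rewrite -size_filter; apply: congr1; rewrite /enum_mem -filter_predI; apply: eq_filter => x; by rewrite /= !inE andbC. Qed.

Lemma size_sorted_elems n (A : {set 'I_n}) : size (sorted_elems A) = #|A|.
Proof. by rewrite /sorted_elems size_sort size_map cardE. Qed.

Lemma shift_le_count n k (A B : {set 'I_n}) : #|A| = k -> #|B| = k ->
  (forall v, #|B :&: [set x | val x <= v]| <= #|A :&: [set x | val x <= v]|) ->
  shift_le k A B.
Proof.
move=> HA HB H; apply/forallP => j.
have E S v : S :&: [set x | val x <= v] = [set x in S | val x <= v].
  by apply/setP => x; rewrite !inE.
have sA : sorted leq (sorted_elems A) by apply: sort_sorted; exact: leq_total.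
have sB : sorted leq (sorted_elems B) by apply: sort_sorted; exact: leq_total.
have jA : j < size (sorted_elems A) by rewrite size_sorted_elems HA.
have jB : j < size (sorted_elems B) by rewrite size_sorted_elems HB.
rewrite nth_sorted_le // count_sorted_elems -E.
apply: leq_trans (H _); rewrite E -count_sorted_elems -nth_sorted_le //.
Qed.

Lemma shift_swap n k (A I J : {set 'I_n}) (t : nat) :
  #|A| = k -> I \subset A -> [disjoint J & A] -> #|J| = #|I| ->
  (forall x, x \in J -> val x <= t) -> (forall x, x \in I -> t < val x) ->
  #|(A :\: I) :|: J| = k /\ shift_le k ((A :\: I) :|: J) A.
Proof.
move=> HA HIA HJA HJI HJt HIt.
have HJAI : [disjoint A :\: I & J].
  rewrite disjoint_sym; apply: disjointWr HJA; exact: subsetDl.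
have Hc : #|(A :\: I) :|: J| = k.
  rewrite cardsU (disjoint_setI0 HJAI) cards0 subn0 cardsD.
  rewrite (setIidPr HIA) HJI subnK ?HA // -HA; exact: subset_leq_card.
split => //; apply: shift_le_count => // v.
set Lv := [set x : 'I_n | val x <= v].
rewrite setIUl cardsU.
have -> : (A :\: I) :&: Lv :&: (J :&: Lv) = set0.
  apply/setP => x; rewrite !inE. 
  case Hx: (x \in J); last by rewrite !andbF. by rewrite (disjointFr HJA Hx) /= andbF.
rewrite cards0 subn0 -(cardsID I (A :&: Lv)).
have -> : (A :\: I) :&: Lv = A :&: Lv :\: I.
  by apply/setP => x; rewrite !inE; case: (x \in I); case: (x \in A).
rewrite addnC leq_add2l.
case: (leqP v t) => Hvt.
  suff -> : A :&: Lv :&: I = set0 by rewrite cards0.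
  apply/setP => x; rewrite !inE; case Hx: (x \in I); last by rewrite andbF.
  by rewrite andbT leqNgt (leq_ltn_trans Hvt (HIt x Hx)) andbF.
have -> : J :&: Lv = J.
  apply/setIidPl/subsetP => x Hx; rewrite inE; apply: leq_trans (HJt x Hx) (ltnW Hvt).
rewrite HJI; apply: subset_leq_card; exact: subsetIr.
Qed.

Lemma swap_count (X Z : finType) (A : {set X}) (B : {set Z}) (R : X -> Z -> bool) :
  \sum_(x in A) #|[set z in B | R x z]| = \sum_(z in B) #|[set x in A | R x z]|.
Proof.
have E (T : finType) (S : {set T}) (p : pred T) :
    #|[set y in S | p y]| = \sum_(y in S) (p y : nat).
  rewrite -sum1_card big_mkcond [RHS]big_mkcond; apply: eq_bigr => y _.
  by rewrite !inE; case: (y \in S); case: (p y).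
under eq_bigr do rewrite E.
under [RHS]eq_bigr do rewrite E.
exact: exchange_big.
Qed.

Lemma norm_match (X Z : finType) (SX : {set X}) (SZ : {set Z}) (R : X -> Z -> bool) dX dZ :
  0 < dZ ->
  (forall x, x \in SX -> #|[set z in SZ | R x z]| = dX) ->
  (forall z, z \in SZ -> #|[set x in SX | R x z]| = dZ) ->
  forall A : {set X}, A \subset SX ->
  #|A| * #|SZ| <= #|[set z in SZ | [exists x in A, R x z]]| * #|SX|.
Proof.
move=> dZ0 HX HZ A HA.
set N := [set z in SZ | [exists x in A, R x z]].
have tot : #|SX| * dX = #|SZ| * dZ.
  rewrite -!sum_nat_const.
  have -> : \sum_(x in SX) dX = \sum_(x in SX) #|[set z in SZ | R x z]|.
    by apply: eq_bigr => x Hx; rewrite HX.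
  have -> : \sum_(z in SZ) dZ = \sum_(z in SZ) #|[set x in SX | R x z]|.
    by apply: eq_bigr => z Hz; rewrite HZ.
  exact: swap_count.
have key : #|A| * dX <= #|N| * dZ.
  rewrite -!sum_nat_const.
  have -> : \sum_(x in A) dX = \sum_(x in A) #|[set z in SZ | R x z]|.
    by apply: eq_bigr => x Hx; rewrite HX // (subsetP HA x Hx).
  rewrite swap_count.
  apply: (@leq_trans (\sum_(z in SZ) (if z \in N then dZ else 0))).
    apply: leq_sum => z Hz.
    case HzN: (z \in N).
      rewrite -(HZ z Hz); apply: subset_leq_card; apply/subsetP => x.
      by rewrite !inE => /andP [Hx ->]; rewrite (subsetP HA x Hx).
    rewrite leqn0 cards_eq0; apply/eqP/setP => x; rewrite !inE.
    apply/negbTE/negP => /andP [Hx Hr].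
    move: HzN; rewrite inE Hz /=; move/negbT/negP; apply.
    by apply/existsP; exists x; rewrite Hx.
  rewrite -big_mkcondr /=.
  apply: eq_leq; apply: eq_bigl => z; rewrite /N !inE.
  by case: (z \in SZ).
rewrite -(leq_pmul2r dZ0) -mulnA -tot mulnA (mulnAC #|A|) (mulnAC #|N|).
by apply: leq_mul.
Qed.

Definition draws (T0 : finType) (Y : {set T0}) k :=
  [set S : {set T0} | S \subset Y & #|S| == k].

Lemma deg_disj (T0 : finType) (Y S : {set T0}) b : S \subset Y ->
  #|[set V in draws Y b | [disjoint S & V]]| = 'C(#|Y| - #|S|, b).
Proof.
move=> HS; rewrite -(cardsDS HS) -cards_draws; apply: eq_card => V.
by rewrite !inE subsetD disjoint_sym; case: (V \subset Y); case: [disjoint V & S]; case: (#|V| == b).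
Qed.

Lemma deg_sub (T0 : finType) (Y U : {set T0}) b : U \subset Y ->
  #|[set V in draws Y b | V \subset U]| = 'C(#|U|, b).
Proof.
move=> HU; rewrite -cards_draws; apply: eq_card => V; rewrite !inE.
case HVU: (V \subset U); last by rewrite andbF.
by rewrite (subset_trans HVU HU) andbT.
Qed.

Lemma deg_sup (T0 : finType) (Y V : {set T0}) a : V \subset Y -> #|V| <= a ->
  #|[set U in draws Y a | V \subset U]| = 'C(#|Y| - #|V|, a - #|V|).
Proof.
move=> HV Ha; rewrite -(cardsDS HV) -cards_draws.
have -> : [set W : {set T0} | W \subset Y :\: V & #|W| == a - #|V|]
   = (fun U : {set T0} => U :\: V) @: [set U in draws Y a | V \subset U].
  apply/setP => W; rewrite inE; apply/andP/imsetP.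
  - move=> [HW /eqP HWc]; move: HW; rewrite subsetD => /andP [HWY HWV].
    exists (W :|: V).
      rewrite !inE subsetUr andbT subUset HWY HV /= cardsU.
      rewrite (disjoint_setI0 HWV) cards0 subn0 HWc subnK //.
    apply/setP => x; rewrite !inE; case HxV: (x \in V) => //=.
      by rewrite (disjointFl HWV HxV).
    by rewrite orbF.
  - move=> [U]; rewrite !inE => /andP [/andP [HUY /eqP HUc] HVU] ->.
    rewrite setSD //=.
    by rewrite cardsDS // HUc.
symmetry; apply: card_in_imset => U1 U2; rewrite !inE => /andP [_ H1] /andP [_ H2] E.
apply/setP => x; case Hx: (x \in V).
  by rewrite (subsetP H1 x Hx) (subsetP H2 x Hx).
by move/setP: E => /(_ x); rewrite !inE Hx.
Qed.

Lemma bin_mono m b g : b <= g -> 2 * g <= m -> 'C(m, b) <= 'C(m, g).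
Proof.
elim: g => [|g IH] Hb Hg; first by move: Hb; rewrite leqn0 => /eqP ->.
case: (leqP b g) => Hbg; last by have -> : b = g.+1 by lia.
apply: leq_trans (IH Hbg _) _; first by lia.
rewrite -(@leq_pmul2l g.+1) // mul_bin_left; apply: leq_mul => //; lia.
Qed.

Lemma bin_le m b a : b <= a -> a + b <= m -> 'C(m, b) <= 'C(m, a).
Proof.
move=> Hba Hm.
case: (leqP (2 * a) m) => H; first exact: bin_mono.
rewrite -(bin_sub (_ : a <= m)); last by lia.
apply: bin_mono; lia.
Qed.

Lemma core (T0 : finType) (Y : {set T0}) al be (a b c d : {set {set T0}}) :
  be <= al -> al + be <= #|Y| ->
  a \subset draws Y al -> b \subset draws Y al ->
  c \subset draws Y be -> d \subset draws Y be ->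
  (forall T V : {set T0}, T \in a -> V \in c -> ~~ [disjoint T & V]) ->
  (forall U V : {set T0}, U \in b -> V \in d -> ~~ [disjoint U & V]) ->
  (forall T U V : {set T0}, T \in a -> U \in b -> V \subset U -> #|V| = be ->
     ~~ [disjoint T & V]) ->
  #|a| + #|b| + #|c| + #|d| <= 'C(#|Y|, al) + 'C(#|Y|, be).
Proof.
move=> Hba Hm Ha Hb Hc Hd Hac Hbd Hab.
set Xs := draws Y al; set Zs := draws Y be.
have cX : #|Xs| = 'C(#|Y|, al) by rewrite cards_draws.
have cZ : #|Zs| = 'C(#|Y|, be) by rewrite cards_draws.
have x0 : 0 < #|Xs| by rewrite cX bin_gt0; lia.
have z0 : 0 < #|Zs| by rewrite cZ bin_gt0; lia.
have zx : #|Zs| <= #|Xs| by rewrite cX cZ; apply: bin_le.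
have M1 : forall A : {set {set T0}}, A \subset Xs ->
    #|A| * #|Zs| <= #|[set V in Zs | [exists T in A, [disjoint T & V]]]| * #|Xs|.
  apply: (@norm_match _ _ Xs Zs (fun T V => [disjoint T & V])
            ('C(#|Y| - al, be)) ('C(#|Y| - be, al))).
  - rewrite bin_gt0; lia.
  - move=> T; rewrite inE => /andP [HT /eqP HTc].
    by rewrite -HTc deg_disj.
  - move=> V; rewrite inE => /andP [HV /eqP HVc].
    rewrite -HVc -(deg_disj al HV); apply: eq_card => T; rewrite !inE disjoint_sym //.
have M2 : forall S : {set {set T0}}, S \subset Zs ->
    #|S| * #|Xs| <= #|[set U in Xs | [exists V in S, V \subset U]]| * #|Zs|.
  apply: (@norm_match _ _ Zs Xs (fun V U => V \subset U)
            ('C(#|Y| - be, al - be)) ('C(al, be))).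
  - rewrite bin_gt0; lia.
  - move=> V; rewrite inE => /andP [HV /eqP HVc].
    by rewrite -HVc deg_sup // HVc.
  - move=> U; rewrite inE => /andP [HU /eqP HUc].
    by rewrite -HUc deg_sub.
set N1a := [set V in Zs | [exists T in a, [disjoint T & V]]].
set N1b := [set V in Zs | [exists T in b, [disjoint T & V]]].
set N2 := [set U in Xs | [exists V in N1a, V \subset U]].
have Ia : #|a| * #|Zs| <= #|N1a| * #|Xs| := M1 a Ha.
have Ib : #|b| * #|Zs| <= #|N1b| * #|Xs| := M1 b Hb.
have I2 : #|N1a| * #|Xs| <= #|N2| * #|Zs|.
  apply: M2; apply/subsetP => V; rewrite inE => /andP [-> _] //.
have aN2 : #|a| <= #|N2|.
  by rewrite -(leq_pmul2r z0); apply: leq_trans Ia _; apply: I2.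
have disjU (S1 S2 S : {set {set T0}}) : S1 \subset S -> S2 \subset S ->
    (forall x, x \in S1 -> x \in S2 -> False) -> #|S1| + #|S2| <= #|S|.
  move=> H1 H2 H12; rewrite -[_ + _]subn0.
  have <- : #|S1 :&: S2| = 0.
    apply/eqP; rewrite cards_eq0; apply/eqP/setP => x; rewrite !inE.
    apply/negbTE/negP => /andP [x1 x2]; exact: H12 x x1 x2.
  by rewrite -cardsU; apply: subset_leq_card; rewrite subUset H1 H2.
have bN2 : #|b| + #|N2| <= #|Xs|.
  apply: disjU => //; first by apply/subsetP => U; rewrite inE => /andP [->].
  move=> U Ub; rewrite inE => /andP [_ /existsP [V /andP [HV HVU]]].
  move: HV; rewrite inE => /andP [HVZ /existsP [T /andP [Ta HTV]]].
  move: HVZ; rewrite inE => /andP [_ /eqP HVc].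
  by move: (Hab T U V Ta Ub HVU HVc); rewrite HTV.
have cN : #|c| + #|N1a| <= #|Zs|.
  apply: disjU => //; first by apply/subsetP => U; rewrite inE => /andP [->].
  move=> V Vc; rewrite inE => /andP [_ /existsP [T /andP [Ta HTV]]].
  by move: (Hac T V Ta Vc); rewrite HTV.
have dN : #|d| + #|N1b| <= #|Zs|.
  apply: disjU => //; first by apply/subsetP => U; rewrite inE => /andP [->].
  move=> V Vd; rewrite inE => /andP [_ /existsP [T /andP [Tb HTV]]].
  by move: (Hbd T V Tb Vd); rewrite HTV.
have h1 : #|Xs| * #|c| + #|a| * #|Zs| <= #|Xs| * #|Zs|.
  have := leq_mul (leqnn #|Xs|) cN; rewrite mulnDr; lia.
have h2 : #|Xs| * #|d| + #|b| * #|Zs| <= #|Xs| * #|Zs|.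
  have := leq_mul (leqnn #|Xs|) dN; rewrite mulnDr; lia.
have h3 : (#|a| + #|b|) * (#|Xs| - #|Zs|) <= #|Xs| * (#|Xs| - #|Zs|).
  apply: leq_mul => //; lia.
rewrite -cX -cZ -(leq_pmul2r x0).
nia.
Qed.

Lemma card_firstk n m : m <= n -> #|firstk n m| = m.
Proof.
move=> Hm.
have -> : firstk n m = (widen_ord Hm) @: [set: 'I_m].
  apply/setP => x; rewrite inE; apply/idP/imsetP => [Hx | [y _ ->]]; last exact: (ltn_ord y).
  by exists (Ordinal Hx) => //; apply: val_inj.
rewrite card_imset ?cardsT ?card_ord // => y1 y2 E; apply: val_inj; exact: (congr1 val E).
Qed.

Lemma restrP n k (F : {set {set 'I_n}}) (R T : {set 'I_n}) :
  reflect (exists2 A, A \in F & A :&: firstk n k.+1 = R /\ T = A :\: R)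
          (T \in restr k F R).
Proof.
apply: (iffP imsetP) => [[A]|[A HA [HAL ->]]].
  by rewrite inE => /andP [HA /eqP HAL] ->; exists A.
by exists A => //; rewrite inE HA HAL eqxx.
Qed.

Lemma restr_draws n k (F : {set {set 'I_n}}) (R : {set 'I_n}) :
  k_uniform k F -> R \subset firstk n k.+1 ->
  restr k F R \subset draws (~: firstk n k.+1) (k - #|R|).
Proof.
move=> HF HR; apply/subsetP => T /restrP [A HA [HAL ->]].
rewrite inE; apply/andP; split.
  apply/subsetP => x; rewrite !inE => /andP [HxR HxA]; apply/negP => HxL.
  by move: HxR; rewrite -HAL !inE HxA HxL.
have HRA : R \subset A by rewrite -HAL subsetIl.
by rewrite cardsDS // HF.
Qed.

Lemma restr_cross n k (F G : {set {set 'I_n}}) (R S T V : {set 'I_n}) :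
  cross_intersecting F G -> R :&: S = set0 ->
  T \in restr k F R -> V \in restr k G S -> ~~ [disjoint T & V].
Proof.
move=> HFG HRS /restrP [A HA [HAL ->]] /restrP [B HB [HBL ->]].
have /set0Pn [x] := HFG A B HA HB; rewrite inE => /andP [xA xB].
have xL : (x \in firstk n k.+1) = false.
  apply/negP; rewrite inE => xL; move/setP: HRS => /(_ x).
  by rewrite -HAL -HBL !inE xA xB xL.
have xT : x \in A :\: R by rewrite inE xA andbT -HAL inE xL andbF.
have xV : x \in B :\: S by rewrite inE xB andbT -HBL inE xL andbF.
by apply/negP => Hd; rewrite (disjointFr Hd xT) in xV.
Qed.

Lemma key_ab n k (F G : {set {set 'I_n}}) (P Q A B : {set 'I_n}) :
  k_uniform k F -> initial k F -> cross_intersecting F G ->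
  [disjoint P & Q] -> A \in F -> A :&: firstk n k.+1 = P ->
  B \in G -> B :&: firstk n k.+1 = Q ->
  #|firstk n k.+1 :\: (P :|: Q)| < #|(A :\: P) :&: (B :\: Q)|.
Proof.
move=> HF HiF HFG HPQ HA HAL HB HBL.
set L := firstk n k.+1; set W := L :\: (P :|: Q); set I := (A :\: P) :&: (B :\: Q).
rewrite ltnNge; apply/negP => HIW.
have : 0 < #|[set J : {set 'I_n} | J \subset W & #|J| == #|I|]|.
  by rewrite cards_draws bin_gt0.
case/card_gt0P => J; rewrite inE => /andP [HJW /eqP HJc].
have PL : P \subset L by rewrite -HAL subsetIr.
have QL : Q \subset L by rewrite -HBL subsetIr.
have HIA : I \subset A.
  by apply/subsetP => x; rewrite !inE => /andP [/andP [_ ->]].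
have HJA : [disjoint J & A].
  rewrite disjoints_subset; apply/subsetP => x xJ; rewrite inE; apply/negP => xA.
  have := subsetP HJW x xJ; rewrite !inE => /andP [].
  rewrite negb_or => /andP [xP _] xL.
  by move: xP; rewrite -HAL !inE xA xL.
have HJt : forall x, x \in J -> val x <= k.
  move=> x xJ; have := subsetP HJW x xJ; rewrite !inE => /andP [_].
  by rewrite ltnS.
have HIt : forall x, x \in I -> k < val x.
  move=> x; rewrite !inE => /andP [/andP [xP xA] _].
  rewrite ltnNge -ltnS; apply/negP => xL.
  by move: xP; rewrite -HAL !inE xA xL.
have [Hc Hs] := shift_swap (HF A HA) HIA HJA HJc HJt HIt.
have HA' := HiF _ _ Hc HA Hs.
have /set0Pn [x] := HFG _ _ HA' HB; rewrite !inE => /andP [/orP [/andP [xI xA] | xJ] xB].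
-
  case xL: (val x < k.+1).
    have xP : x \in P by rewrite -HAL !inE xA xL.
    have xQ : x \in Q by rewrite -HBL !inE xB xL.
    by rewrite (disjointFr HPQ xP) in xQ.
  have xP : x \notin P by rewrite -HAL !inE xL andbF.
  have xQ : x \notin Q by rewrite -HBL !inE xL andbF.
  by move: xI; rewrite xP xQ xA xB.
- have := subsetP HJW x xJ; rewrite !inE negb_or => /andP [/andP [_ xQ] xL].
  by move: xQ; rewrite -HBL !inE xB xL.
Qed.

Theorem lemma3p2 (n k i : nat) (F G : {set {set 'I_n}}) (P Q : {set 'I_n}) :
  4 <= 2 * k -> 2 * k <= n ->
  k_uniform k F -> k_uniform k G ->
  nontrivial F -> nontrivial G ->
  cross_intersecting F G ->
  initial k F -> initial k G ->
  2 <= i -> 2 * i <= k ->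
  P \subset firstk n k.+1 -> #|P| = i ->
  Q \subset firstk n k.+1 -> #|Q| = i ->
  [disjoint P & Q] ->
  #|restr k F P| + #|restr k G Q|
    + #|restr k G (firstk n k.+1 :\: P)| + #|restr k F (firstk n k.+1 :\: Q)|
  <= 'C(n - k.+1, k - i) + 'C(n - k.+1, i - 1).
Proof.
move=> H4 Hn HF HG _ _ HFG HiF HiG Hi2 Hik HPL HPc HQL HQc HPQ.
set L := firstk n k.+1.
have cL : #|L| = k.+1 by apply: card_firstk; lia.
have cY : #|~: L| = n - k.+1.
  have := cardsC L; rewrite card_ord cL; lia.
have cLP : #|L :\: P| = k.+1 - i by rewrite cardsDS // cL HPc.
have cLQ : #|L :\: Q| = k.+1 - i by rewrite cardsDS // cL HQc.
have E : k - (k.+1 - i) = i - 1 by lia.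
rewrite -cY.
apply: (core (al := k - i) (be := i - 1)).
- lia.
- rewrite cY; lia.
- by have := restr_draws HF HPL; rewrite HPc.
- by have := restr_draws HG HQL; rewrite HQc.
- by have := restr_draws HG (subsetDl L P); rewrite cLP E.
- by have := restr_draws HF (subsetDl L Q); rewrite cLQ E.
- move=> T V Ta Vc; apply: (restr_cross HFG _ Ta Vc).
  by apply/setP => x; rewrite !inE; case: (x \in P).
- move=> U V Ub Vd; rewrite disjoint_sym; apply: (restr_cross HFG _ Vd Ub).
  by apply/setP => x; rewrite !inE; case: (x \in Q); rewrite ?andbF.
- move=> T U V /restrP [A HA [HAL ->]] /restrP [B HB [HBL ->]] HVU HVc.
  have K := key_ab HF HiF HFG HPQ HA HAL HB HBL.
  have cW : #|L :\: (P :|: Q)| = k.+1 - 2 * i.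
    rewrite cardsDS; last by rewrite subUset HPL HQL.
    by rewrite cardsU (disjoint_setI0 HPQ) cards0 cL HPc HQc; lia.
  have HQB : Q \subset B by rewrite -HBL subsetIl.
  have cU : #|B :\: Q| = k - i by rewrite cardsDS // HG // HQc.
  apply/negP => Hd.
  have : V \subset (B :\: Q) :\: (A :\: P) by rewrite subsetD HVU disjoint_sym Hd.
  move/subset_leq_card; rewrite cardsD cU HVc setIC.
  move: K; rewrite -/L cW; lia.
Qed.
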